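(* For every NBA $\mathcal A$, the relation $S(\subseteq^{\mathrm{bw\text{-}di}},\supseteq^{\mathrm{bw\text{-}di}})$ is good for saturation, i.e. $\mathcal L(\mathrm{Sat}(\mathcal A,S(\subseteq^{\mathrm{bw\text{-}di}},\supseteq^{\mathrm{bw\text{-}di}})))=\mathcal L(\mathcal A)$.
   Context: An NBA $\mathcal A=(\Sigma,Q,I,F,\delta)$, $\delta\subseteq Q\times\Sigma\times Q$, forward and backward complete; initial traces start in $I$, fair traces are infinite and visit $F$ infinitely often; the language is the set of infinite words with an initial fair trace. Backward direct trace inclusion: $p\subseteq^{\mathrm{bw\text{-}di}}q$ iff for every finite word $\sigma_0\cdots\sigma_{m-1}$ and every initial finite trace $p_0\xrightarrow{\sigma_0}\cdots\xrightarrow{\sigma_{m-1}}p_m=p$ there is an initial finite trace $q_0\xrightarrow{\sigma_0}\cdots\xrightarrow{\sigma_{m-1}}q_m=q$ with $p_i\in F\Rightarrow q_i\in F$ for $0\le i\le m$; $\supseteq^{\mathrm{bw\text{-}di}}$ is its inverse. Let $\Delta=Q\times\Sigma\times Q$; $S(R_b,R_f)=\{((p,\sigma,r),(p',\sigma,r'))\in\Delta\times\Delta:p\,R_b\,p',\ r\,R_f\,r'\}$. For reflexive $S\subseteq\Delta\times\Delta$, $\mathrm{Sat}(\mathcal A,S)=(\Sigma,Q,I,F,\{t'\in\Delta:\exists t\in\delta,(t',t)\in S\})$. Good for saturation means the language is unchanged. *)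

(* Defs.v *)
From mathcomp Require Import all_boot.
Set Implicit Arguments. Unset Strict Implicit. Unset Printing Implicit Defensive.

Record nba (Sigma Q : finType) := NBA {
  init  : Q -> Prop;
  final : Q -> Prop;
  trans : Q -> Sigma -> Q -> Prop }.

Section Defs.
Variables (Sigma Q : finType).
Implicit Types (A : nba Sigma Q).

Definition fw_complete A : Prop :=
  forall (q : Q) (a : Sigma), exists q', trans A q a q'.
Definition bw_complete A : Prop :=
  forall (q : Q) (a : Sigma), exists q', trans A q' a q.

Definition is_trace A (w : nat -> Sigma) (t : nat -> Q) : Prop :=
  forall i, trans A (t i) (w i) (t i.+1).

Definition fair A (t : nat -> Q) : Prop :=
  forall n, exists m, n <= m /\ final A (t m).

Definition accepts A (w : nat -> Sigma) : Prop :=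
  exists t, init A (t 0) /\ is_trace A w t /\ fair A t.

(* A finite word
   sigma_0..sigma_{m-1} and a finite trace p_0..p_m are represented by
   functions on nat of which only the first m (resp. m+1) values matter. *)
Definition bw_di_incl A (p q : Q) : Prop :=
  forall (m : nat) (w : nat -> Sigma) (ps : nat -> Q),
    init A (ps 0) ->
    (forall i, i < m -> trans A (ps i) (w i) (ps i.+1)) ->
    ps m = p ->
    exists qs : nat -> Q,
      [/\ init A (qs 0),
          (forall i, i < m -> trans A (qs i) (w i) (qs i.+1)),
          qs m = q &
          (forall i, i <= m -> final A (ps i) -> final A (qs i))].

Definition bw_di_sup A (p q : Q) : Prop := bw_di_incl A q p.

Definition S_rel (Rb Rf : Q -> Q -> Prop)
  (t1 t2 : Q * Sigma * Q) : Prop :=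
  let: (p, a, r) := t1 in let: (p', a', r') := t2 in
  [/\ a = a', Rb p p' & Rf r r'].

Definition Sat A (S : Q * Sigma * Q -> Q * Sigma * Q -> Prop) : nba Sigma Q :=
  NBA (init A) (final A)
      (fun p a r => exists t, trans A t.1.1 t.1.2 t.2 /\ S (p, a, r) t).

End Defs.

(* Main.v *)
Require Import Defs.
From mathcomp Require Import all_boot.
From mathcomp Require Import zify.
From Stdlib Require Import ClassicalEpsilon Classical.

Section Proof.
Variables (Sigma Q : finType) (A : nba Sigma Q) (w : nat -> Sigma) (t : nat -> Q).

Definition G (M : nat) (qs : nat -> Q) : Prop :=
  [/\ init A (qs 0), (forall i, i < M -> trans A (qs i) (w i) (qs i.+1)) &
      (forall i, i <= M -> final A (t i) -> final A (qs i))].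

Definition Ext (n : nat) (f : nat -> Q) : Prop :=
  forall m, exists M, m <= M /\ exists qs, G M qs /\ forall i, i < n -> qs i = f i.

Definition upd (f : nat -> Q) n q := fun i => if i == n then q else f i.

Lemma ext_step (n : nat) (f : nat -> Q) : Ext n f -> exists q, Ext n.+1 (upd f n q).
Proof.
move=> E; apply: NNPP => H.
have H' : forall q, exists m, forall M, m <= M -> forall qs, G M qs ->
   (forall i, i < n.+1 -> qs i = upd f n q i) -> False.
  move=> q; apply: NNPP => Hq; apply: H; exists q => m.
  apply: NNPP => Hm; apply: Hq; exists m => M HM qs HG Hag.
  by apply: Hm; exists M; split=> //; exists qs.
pose mq q := epsilon (inhabits 0) (fun m => forall M, m <= M -> forall qs, G M qs ->
   (forall i, i < n.+1 -> qs i = upd f n q i) -> False).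
have Hmq q := epsilon_spec (inhabits 0) _ (H' q).
have [M [HM [qs [HG Hag]]]] := E (\max_(q : Q) mq q).
apply: (Hmq (qs n) M _ qs HG).
  apply: leq_trans HM; exact: leq_bigmax.
move=> i Hi; rewrite /upd; case: eqP => [->//|Hne]; apply: Hag; lia.
Qed.

Hypothesis allG : forall M, exists qs, G M qs.

Lemma konig (q0 : Q) : exists p : nat -> Q,
  forall n, exists qs, G n qs /\ forall i, i <= n -> qs i = p i.
Proof.
pose h n f := epsilon (inhabits q0) (fun q => Ext n.+1 (upd f n q)).
pose F := fix F n := if n is n'.+1 then upd (F n') n' (h n' (F n')) else (fun _ => q0).
have EF : forall n, Ext n (F n).
  elim=> [|n IH] /=.
    move=> m; have [qs Hqs] := allG m; exists m; split=> //; exists qs; split=> //.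
  exact (epsilon_spec (inhabits q0) (fun q => Ext n.+1 (upd (F n) n q)) (ext_step _ _ IH)).
have stab : forall k i, F (i.+1 + k) i = F i.+1 i.
  move=> k i; elim: k => [|k IH]; first by rewrite addn0.
  by rewrite addnS /= /upd; have ->: (i == i.+1 + k) = false by lia.
exists (fun i => F i.+1 i) => n.
have [M [HM [qs [[H0 Ht Hf] Hag]]]] := EF n.+1 n.
exists qs; split; first (split=> //; [move=> i Hi; apply: Ht; lia | move=> i Hi; apply: Hf; lia]).
move=> i Hi; rewrite Hag; last lia.
by have := stab (n - i) i; have ->: i.+1 + (n - i) = n.+1 by lia.
Qed.

End Proof.

Lemma incl_refl (Sigma Q : finType) (A : nba Sigma Q) p : bw_di_incl A p p.
Proof. move=> m w ps H0 Ht Hm; exists ps; split=> //. Qed.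

Theorem theorem10p6 (Sigma Q : finType) (A : nba Sigma Q) :
  fw_complete A -> bw_complete A ->
  forall w : nat -> Sigma,
    accepts (Sat A (S_rel (bw_di_incl A) (bw_di_sup A))) w <-> accepts A w.
Proof.
move=> _ _ w; split; last first.
  move=> [t [H0 [Ht Hf]]]; exists t; split=> //; split=> // i.
  exists (t i, w i, t i.+1); split; first exact: Ht.
  by split=> //; apply: incl_refl.
move=> [t [H0 [Ht Hf]]].
have main : forall n, exists qs, @G _ _ A w t n qs /\ qs n = t n.
  elim=> [|n [qs [[Q0 Qt Qf] Qn]]].
    by exists t; split=> //; split=> // i; rewrite ltn0.
  have [[[p' a'] r'] [Htr [Ha Hp Hr]]] := Ht n.
  simpl in Htr, Ha, Hr; subst a'.
  have [qs2 [Q20 Q2t Q2n Q2f]] := Hp n w qs Q0 Qt Qn.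
  pose qs3 := fun i => if i == n.+1 then r' else qs2 i.
  have [|||qs4 [Q40 Q4t Q4n Q4f]] := Hr n.+1 w qs3.
  - by rewrite /qs3.
  - move=> i Hi; rewrite /qs3.
    have ->: (i == n.+1) = false by lia.
    case: (eqVneq i n) => [->|Hne]; first by rewrite eqxx Q2n.
    have ->: (i.+1 == n.+1) = false by lia.
    apply: Q2t; lia.
  - by rewrite /qs3 eqxx.
  exists qs4; split=> //; split=> // i Hi Fi.
  case: (eqVneq i n.+1) => [E|Hne]; first by subst i; rewrite Q4n.
  apply: Q4f => //; rewrite /qs3 (negbTE Hne).
  apply: Q2f; first lia.
  apply: Qf => //; lia.
have allG : forall M, exists qs, @G _ _ A w t M qs.
  by move=> M; have [qs [? _]] := main M; exists qs.
have [p Hp] := @konig _ _ A w t allG (t 0).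
exists p; split; [|split].
- have [qs [[? _ _] E]] := Hp 0; by rewrite -E.
- move=> i; have [qs [[_ Qt _] E]] := Hp i.+1.
  rewrite -E; last lia. rewrite -E; last lia. apply: Qt; lia.
- move=> n; have [m [Hm Fm]] := Hf n; exists m; split=> //.
  have [qs [[_ _ Qf] E]] := Hp m; rewrite -E //; exact: Qf.
Qed.
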